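(* Let $\gamma\to_d\gamma'$ be a non-smooth d-step and let $k^*=\min\{\mathrm{rank}_\gamma(p,q) : (p,q)\in\mathrm{Edges},\ (p,q)\text{ non-smooth in }\gamma,\ \gamma'.p.d\ne\gamma.p.d \text{ or } \gamma'.q.d\neq\gamma.q.d\}$ (the set is nonempty). Then: (i) for every $e\in\mathrm{Edges}$, if $\mathrm{rank}_{\gamma'}(e)\le k^*$ and $e$ is non-smooth in $\gamma'$, then $\mathrm{rank}_\gamma(e)=\mathrm{rank}_{\gamma'}(e)$ and $e$ is non-smooth in $\gamma$; (ii) for every $e\in\mathrm{Edges}$, if $\mathrm{rank}_{\gamma}(e)<k^*$ and $e$ is non-smooth in $\gamma$, then $\mathrm{rank}_{\gamma'}(e)=\mathrm{rank}_{\gamma}(e)$ and $e$ is non-smooth in $\gamma'$; (iii) there exists $e\in\mathrm{Edges}$ with $\mathrm{rank}_\gamma(e)=k^*$, $e$ non-smooth in $\gamma$, and such that if $e$ is non-smooth in $\gamma'$ then $\mathrm{rank}_{\gamma'}(e)>\mathrm{rank}_\gamma(e)$.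
   Context: Let $G$ be a finite, connected, undirected graph with node set $V$ and a distinguished node $r$ (the root); $\mathrm{Edges}=\{(p,q)\in V\times V : p,q\text{ adjacent}\}$ (both orientations). Each node $p$ has a fixed ordered list $N(p)$ of its neighbours. A configuration $\gamma$ assigns to each node $p$ a value $\gamma.p.d\in\mathbb N$ and a neighbour $\gamma.p.par\in N(p)$. For a non-root $p$ let $Dist_p(\gamma)=\min\{\gamma.q.d+1 : q\in N(p)\}$. Algorithm BFS: Root enabled iff $\gamma.r.d\neq 0$, executing sets $r.d:=0$. Non-root $p$, action CD: enabled iff $\gamma.p.d\ne Dist_p(\gamma)$, executing sets $p.d:=Dist_p(\gamma)$. Non-root $p$, action CP: enabled iff $\gamma.p.d=Dist_p(\gamma)$ and $\gamma.q_0.d+1\neq\gamma.p.d$ with $q_0=\gamma.p.par$; executing sets $p.par$ to the first $q\in N(p)$ with $\gamma.q.d+1=\gamma.p.d$. A step $\gamma\to\gamma'$ holds iff a nonempty set $S$ of enabled nodes simultaneously execute their enabled action (evaluated in $\gamma$), others unchanged. A d-step $\gamma\to_d\gamma'$ is a step with $\gamma.r.d=\gamma'.r.d$ and $\gamma.p.d\neq\gamma'.p.d$ for some $p$. An edge $(p,q)$ is smooth in $\gamma$ if $|\gamma.p.d-\gamma.q.d|\le 1$, non-smooth otherwise. A d-step $\gamma\to_d\gamma'$ is smooth if every node $p$ with $\gamma'.p.d\neq\gamma.p.d$ has all its edges $(p,q)$, $q\in N(p)$, smooth in $\gamma$; otherwise it is non-smooth. $\mathrm{rank}_\gamma(p,q)=\min(\gamma.p.d,\gamma.q.d)$.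 *)

(* Defs.v *)
From mathcomp Require Import all_boot.
Set Implicit Arguments. Unset Strict Implicit. Unset Printing Implicit Defensive.

Record config (V : finType) := Config { dv : V -> nat; par : V -> V }.

Section BFS.
Variables (V : finType) (N : V -> seq V) (r : V).

(* Dist_p(g) = min { g.q.d + 1 : q in N(p) } (N p nonempty for non-root p in a
   connected graph with >= 2 nodes; the head value is only a seed for the min). *)
Definition Dist (g : config V) (p : V) : nat :=
  \big[minn/(dv g (head p (N p))).+1]_(q <- N p) (dv g q).+1.

Definition CD_enabled g p := (p != r) && (dv g p != Dist g p).
Definition CP_enabled g p :=
  [&& p != r, dv g p == Dist g p & (dv g (par g p)).+1 != dv g p].
Definition root_enabled g p := (p == r) && (dv g r != 0).
Definition enabled g p := [|| root_enabled g p, CD_enabled g p | CP_enabled g p].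

Definition first_par g p : V :=
  nth p (N p) (find (fun q => (dv g q).+1 == dv g p) (N p)).

Definition exec_d g p : nat :=
  if p == r then 0 else if CD_enabled g p then Dist g p else dv g p.
Definition exec_par g p : V :=
  if p == r then par g p else if CP_enabled g p then first_par g p else par g p.

Definition step (g g' : config V) : Prop :=
  exists S : {set V}, [/\ S != set0,
    (forall p, p \in S -> enabled g p) &
    (forall p, dv g' p = (if p \in S then exec_d g p else dv g p) /\
               par g' p = (if p \in S then exec_par g p else par g p))].

Definition dstep g g' : Prop :=
  step g g' /\ dv g r = dv g' r /\ exists p, dv g p <> dv g' p.

Definition smooth (g : config V) (p q : V) : bool :=
  (dv g p <= (dv g q).+1) && (dv g q <= (dv g p).+1).

Definition nonsmooth_dstep (adj : rel V) g g' : Prop :=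
  dstep g g' /\ ~ (forall p, dv g' p <> dv g p -> forall q, adj p q -> smooth g p q).

Definition rank (g : config V) (p q : V) : nat := minn (dv g p) (dv g q).

Definition kstar_set (adj : rel V) g g' (p q : V) : bool :=
  [&& adj p q, ~~ smooth g p q & (dv g' p != dv g p) || (dv g' q != dv g q)].

Definition is_kstar (adj : rel V) g g' (k : nat) : Prop :=
  (exists p q, kstar_set adj g g' p q /\ rank g p q = k) /\
  (forall p q, kstar_set adj g g' p q -> k <= rank g p q).

Definition valid_config (adj : rel V) (g : config V) : Prop :=
  forall p, par g p \in N p.

End BFS.

(* Main.v *)
Require Import Defs.
From mathcomp Require Import all_boot.
From mathcomp Require Import zify.

Lemma bigmin_le_mem (T : eqType) (l : seq T) (F : T -> nat) s y :
  y \in l -> \big[minn/s]_(q <- l) F q <= F y.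
Proof.
elim: l => [|a l IH] //=; rewrite big_cons in_cons => /orP [/eqP->|h].
  exact: geq_minl.
exact: leq_trans (geq_minr _ _) (IH h).
Qed.

Lemma bigmin_attained (T : eqType) (l : seq T) (F : T -> nat) s :
  \big[minn/s]_(q <- l) F q = s \/ exists2 y, y \in l & \big[minn/s]_(q <- l) F q = F y.
Proof.
elim: l => [|a l IH]; first by left; rewrite big_nil.
rewrite big_cons.
have [h|h] := leqP (F a) (\big[minn/s]_(q <- l) F q).
  by right; exists a; rewrite ?mem_head ?(minn_idPl h).
case: IH => [->|[y hy ->]]; first by left.
by right; exists y; rewrite // in_cons hy orbT.
Qed.

Theorem lemma6 (V : finType) (adj : rel V) (N : V -> seq V) (r : V)
  (adj_sym : symmetric adj) (adj_irr : irreflexive adj)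
  (adj_conn : forall x y : V, connect adj x y)
  (N_uniq : forall p, uniq (N p)) (N_adj : forall p q, (q \in N p) = adj p q)
  (g g' : config V)
  (g_valid : valid_config N adj g) (g'_valid : valid_config N adj g')
  (Hstep : nonsmooth_dstep N r adj g g') :
  exists k : nat, is_kstar adj g g' k /\
  (* (i) *)
  (forall p q, adj p q -> rank g' p q <= k -> ~~ smooth g' p q ->
     rank g p q = rank g' p q /\ ~~ smooth g p q) /\
  (* (ii) *)
  (forall p q, adj p q -> rank g p q < k -> ~~ smooth g p q ->
     rank g' p q = rank g p q /\ ~~ smooth g' p q) /\
  (* (iii) *)
  (exists p q, [/\ adj p q, rank g p q = k, ~~ smooth g p q &
     (~~ smooth g' p q -> rank g' p q > rank g p q)]).
Proof.
move: Hstep => [[[S [_ _ HS]] [Hr _]] Hns].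
have Fch : forall x, dv g' x != dv g x -> x != r /\ dv g' x = Dist N g x.
  move=> x hx; have [e _] := HS x.
  have xr : x != r by apply: contraNneq hx => ->; rewrite Hr.
  split => //; move: hx; rewrite e.
  case: (x \in S); last by rewrite eqxx.
  rewrite /exec_d (negbTE xr) /CD_enabled xr /=.
  by case: ifP => //; rewrite eqxx.
have Fle : forall x y, adj x y -> Dist N g x <= (dv g y).+1.
  by move=> x y; rewrite -N_adj => hy; apply: bigmin_le_mem.
have Fex : forall x, exists y, (adj x y \/ y = x) /\ Dist N g x = (dv g y).+1.
  move=> x; case: (@bigmin_attained V (N x) (fun q => (dv g q).+1)
    (dv g (head x (N x))).+1) => [e|[y hy e]].
    case E: (N x) => [|a l]; first by exists x; split; [right|rewrite /Dist E big_nil].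
    exists a; split; first by left; rewrite -N_adj E mem_head.
    by rewrite /Dist e E.
  by exists y; split; [left; rewrite -N_adj|rewrite /Dist e].
have ex : exists k, [exists p, exists q, kstar_set adj g g' p q && (rank g p q == k)].
  case: (boolP [exists p, exists q, kstar_set adj g g' p q]) =>
    [/existsP [p /existsP [q h]]|hn].
    exists (rank g p q); apply/existsP; exists p; apply/existsP; exists q.
    by rewrite h eqxx.
  exfalso; apply: Hns => p hp q hpq; apply/negPn/negP => hs.
  move/negP: hn; apply; apply/existsP; exists p; apply/existsP; exists q.
  rewrite /kstar_set hpq hs /=; apply/orP; left; apply/eqP; exact: hp.
case: (ex_minnP ex) => k /existsP [p0 /existsP [q0 /andP [Hk0 /eqP Hrk0]]] Hmin.
have Kmin : forall p q, kstar_set adj g g' p q -> k <= rank g p q.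
  move=> p q h; apply: Hmin; apply/existsP; exists p; apply/existsP; exists q.
  by rewrite h eqxx.
have L3 : forall x, dv g' x != dv g x -> dv g x < dv g' x \/ k < dv g' x.
  move=> x hx; case: (ltnP (dv g x) (dv g' x)) => h; [by left|right].
  have [xr e] := Fch x hx; have [y [[hy|ey] ed]] := Fex x.
    have ks : kstar_set adj g g' x y.
      rewrite /kstar_set hy hx /= /smooth.
      move/eqP: hx; rewrite e ed in h * => hx; lia.
    have := Kmin _ _ ks; rewrite /rank; move/eqP: hx; rewrite e ed in h *; lia.
  subst y; move/eqP: hx; rewrite e ed in h *; lia.
have Nd : forall x y, adj x y -> dv g' x = dv g x \/
    (dv g' x <= (dv g y).+1 /\ (dv g x < dv g' x \/ k < dv g' x)).
  move=> x y hxy; case: (eqVneq (dv g' x) (dv g x)) => h; [by left|right].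
  by split; [rewrite (Fch x h).2; exact: Fle | exact: L3].
have E : forall p q, adj p q ->
  [/\ dv g' p = dv g p \/ (dv g' p <= (dv g q).+1 /\ (dv g p < dv g' p \/ k < dv g' p)),
      dv g' q = dv g q \/ (dv g' q <= (dv g p).+1 /\ (dv g q < dv g' q \/ k < dv g' q)) &
      smooth g p q \/ (dv g' p = dv g p /\ dv g' q = dv g q) \/ k <= rank g p q].
  move=> p q hpq; split; [exact: Nd | apply: Nd; by rewrite adj_sym |].
  case: (boolP (smooth g p q)) => hs; [by left | right].
  case: (boolP ((dv g' p != dv g p) || (dv g' q != dv g q))) => h.
    by right; apply: Kmin; rewrite /kstar_set hpq hs h.
  by left; move: h; rewrite negb_or !negbK => /andP [/eqP -> /eqP ->].
exists k; split; first by split; [exists p0, q0 | exact: Kmin].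
split.
  move=> p q hpq; have [e1 e2 e3] := E p q hpq; move: e1 e2 e3.
  rewrite /rank /smooth; lia.
split.
  move=> p q hpq; have [e1 e2 e3] := E p q hpq; move: e1 e2 e3.
  rewrite /rank /smooth; lia.
move: (Hk0); rewrite /kstar_set => /and3P [hpq hs hch].
exists p0, q0; split => //.
have [e1 e2 e3] := E p0 q0 hpq; move: e1 e2 e3 hs hch Hrk0.
rewrite /rank /smooth; lia.
Qed.
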